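(* Let $\{\mathcal G,(\Gamma_0,\Gamma_1),(\widetilde\Gamma_0,\widetilde\Gamma_1)\}$ be a triple for the adjoint pair $\{S,\widetilde S\}$ satisfying (G), (D), (M), with $\rho(A_0)\neq\emptyset$, $\gamma$-fields $\gamma,\widetilde\gamma$ and Weyl functions $M,\widetilde M$. Let $B_1,B_2,B_1',B_2'$ be linear operators in $\mathcal G$ such that $(B_1B_2\varphi,\psi)=(\varphi,B_1'B_2'\psi)$ for all $\varphi\in\operatorname{dom}(B_1B_2)$, $\psi\in\operatorname{dom}(B_1'B_2')$. Suppose there is $\lambda\in\rho(A_0)$ such that for every $f\in\mathfrak H$: $\widetilde\gamma(\overline\lambda)^*f\in\operatorname{dom}B_2$ and $B_2\widetilde\gamma(\overline\lambda)^*f\in\operatorname{ran}(I-B_2M(\lambda)B_1)$; and for every $g\in\mathfrak H$: $\gamma(\lambda)^*g\in\operatorname{dom}B_2'$ and $B_2'\gamma(\lambda)^*g\in\operatorname{ran}(I-B_2'\widetilde M(\overline\lambda)B_1')$. Then $A_{B_1B_2}=(\widetilde A_{B_1'B_2'})^*$; in particular $A_{B_1B_2}$ is a closed operator in $\mathfrak H$ with $\lambda\in\rho(A_{B_1B_2})$.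
   Context: Let $\mathfrak H$ be a separable Hilbert space. An adjoint pair $\{S,\widetilde S\}$ consists of densely defined closed operators $S,\widetilde S$ in $\mathfrak H$ with $(Sf,g)=(f,\widetilde Sg)$ for all $f\in\operatorname{dom}S$, $g\in\operatorname{dom}\widetilde S$. Fix operators $T\subset S^*$ and $\widetilde T\subset\widetilde S^*$ which are cores, i.e. $\overline T=S^*$ and $\overline{\widetilde T}=\widetilde S^*$. A triple $\{\mathcal G,(\Gamma_0,\Gamma_1),(\widetilde\Gamma_0,\widetilde\Gamma_1)\}$ for $\{S,\widetilde S\}$ consists of a Hilbert space $\mathcal G$ and linear maps $\Gamma_0,\Gamma_1:\operatorname{dom}T\to\mathcal G$, $\widetilde\Gamma_0,\widetilde\Gamma_1:\operatorname{dom}\widetilde T\to\mathcal G$. Put $A_0:=T\upharpoonright\ker\Gamma_0$ and $\widetilde A_0:=\widetilde T\upharpoonright\ker\widetilde\Gamma_0$. Conditions: (G) $(Tf,g)_{\mathfrak H}-(f,\widetilde Tg)_{\mathfrak H}=(\Gamma_1f,\widetilde\Gamma_0g)_{\mathcal G}-(\Gamma_0f,\widetilde\Gamma_1g)_{\mathcal G}$ for all $f\in\operatorname{dom}T$, $g\in\operatorname{dom}\widetilde T$; (D) $\operatorname{ran}\Gamma_0$ and $\operatorname{ran}\widetilde\Gamma_0$ are dense in $\mathcal G$; (M) $A_0^*=\widetilde A_0$ and $\widetilde A_0^*=A_0$ (so $\lambda\in\rho(A_0)$ iff $\overline\lambda\in\rho(\widetilde A_0)$). For $\lambda\in\rho(A_0)$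 one has $\operatorname{dom}T=\ker\Gamma_0\dotplus\ker(T-\lambda)$, so $\Gamma_0\upharpoonright\ker(T-\lambda)$ is injective; similarly for $\widetilde T$. The $\gamma$-fields are $\gamma(\lambda):=(\Gamma_0\upharpoonright\ker(T-\lambda))^{-1}$, $\widetilde\gamma(\mu):=(\widetilde\Gamma_0\upharpoonright\ker(\widetilde T-\mu))^{-1}$; the Weyl functions are $M(\lambda):=\Gamma_1\gamma(\lambda)$, $\lambda\in\rho(A_0)$, and $\widetilde M(\mu):=\widetilde\Gamma_1\widetilde\gamma(\mu)$, $\mu\in\rho(\widetilde A_0)$. Products of operators have their natural domains, e.g. $\operatorname{dom}(B_1B_2)=\{\varphi\in\operatorname{dom}B_2:B_2\varphi\in\operatorname{dom}B_1\}$. Define $A_{B_1B_2}f:=Tf$ on $\operatorname{dom}A_{B_1B_2}:=\{f\in\operatorname{dom}T:\Gamma_1f\in\operatorname{dom}(B_1B_2),\ B_1B_2\Gamma_1f=\Gamma_0f\}$ and $\widetilde A_{B_1'B_2'}g:=\widetilde Tg$ on $\operatorname{dom}\widetilde A_{B_1'B_2'}:=\{g\in\operatorname{dom}\widetilde T:\widetilde\Gamma_1g\in\operatorname{dom}(B_1'B_2'),\ B_1'B_2'\widetilde\Gamma_1g=\widetilde\Gamma_0g\}$. The resolvent set $\rho(A)$ consists of $\lambda$ such that $A-\lambda$ is bijective onto $\mathfrak H$ with bounded inverse. *)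

(* Defs.v *)
(* Hilbert spaces are lmodType R[i] equipped with an inner product [ip]
   (linear in the first, conjugate linear in the second argument).
   (Possibly unbounded, possibly multivalued) operators are represented
   by their graphs, i.e. relations  X -> Y -> Prop. *)
From mathcomp Require Import all_boot all_algebra.
From mathcomp Require Import reals.
From mathcomp.real_closed Require Import complex.
Import GRing.Theory Num.Theory.

Set Implicit Arguments.
Unset Strict Implicit.
Unset Printing Implicit Defensive.

Local Open Scope ring_scope.

Section Defs.
Variable R : realType.
Local Notation C := R[i].

Definition is_inner_product (V : lmodType C) (ip : V -> V -> C) : Prop :=
  [/\ (forall (a : C) (x y z : V), ip (a *: x + y) z = a * ip x z + ip y z),
      (forall x y : V, ip x y = (ip y x)^*),
      (forall x : V, 0 <= ip x x) &
      (forall x : V, ip x x = 0 -> x = 0)].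

Definition hnorm (V : lmodType C) (ip : V -> V -> C) (x : V) : C :=
  sqrtC (ip x x).

Definition converges (V : lmodType C) (ip : V -> V -> C)
    (u : nat -> V) (x : V) : Prop :=
  forall e : C, 0 < e -> exists N : nat, forall n : nat,
    (N <= n)%N -> hnorm ip (u n - x) < e.

Definition cauchy_seq (V : lmodType C) (ip : V -> V -> C) (u : nat -> V) : Prop :=
  forall e : C, 0 < e -> exists N : nat, forall m n : nat,
    (N <= m)%N -> (N <= n)%N -> hnorm ip (u m - u n) < e.

Definition is_hilbert (V : lmodType C) (ip : V -> V -> C) : Prop :=
  is_inner_product ip /\
  (forall u : nat -> V, cauchy_seq ip u -> exists x, converges ip u x).

Definition dense (V : lmodType C) (ip : V -> V -> C) (D : V -> Prop) : Prop :=
  forall (x : V) (e : C), 0 < e -> exists y, D y /\ hnorm ip (x - y) < e.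

Definition separable (V : lmodType C) (ip : V -> V -> C) : Prop :=
  exists d : nat -> V, dense ip (fun y => exists n, y = d n).

Definition oprel (X Y : Type) := X -> Y -> Prop.

Definition dom (X Y : Type) (A : oprel X Y) (x : X) : Prop := exists y, A x y.
Definition ran (X Y : Type) (A : oprel X Y) (y : Y) : Prop := exists x, A x y.

Definition op_sub (X Y : Type) (A B : oprel X Y) : Prop :=
  forall x y, A x y -> B x y.
Definition releq (X Y : Type) (A B : oprel X Y) : Prop :=
  forall x y, A x y <-> B x y.

Definition single_valued (X Y : Type) (A : oprel X Y) : Prop :=
  forall x y1 y2, A x y1 -> A x y2 -> y1 = y2.

Definition linear_op (X Y : lmodType C) (A : oprel X Y) : Prop :=
  [/\ single_valued A, A 0 0 &
      (forall (a : C) x1 y1 x2 y2, A x1 y1 -> A x2 y2 ->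
         A (a *: x1 + x2) (a *: y1 + y2))].

Definition rcomp (X Y Z : Type) (B : oprel Y Z) (A : oprel X Y) : oprel X Z :=
  fun x z => exists y, A x y /\ B y z.

Definition id_minus (X : lmodType C) (A : oprel X X) : oprel X X :=
  fun x y => exists z, A x z /\ y = x - z.

(* adjoint (relation); for densely defined A it is the usual adjoint
   operator:  A^* y = z  iff  (A x, y) = (x, z) for all x in dom A *)
Definition adjoint (X Y : lmodType C) (ipX : X -> X -> C) (ipY : Y -> Y -> C)
    (A : oprel X Y) : oprel Y X :=
  fun y z => forall x w, A x w -> ipY w y = ipX x z.

Definition rclosure (X Y : lmodType C) (ipX : X -> X -> C) (ipY : Y -> Y -> C)
    (A : oprel X Y) : oprel X Y :=
  fun x y => exists (u : nat -> X) (v : nat -> Y),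
    (forall n, A (u n) (v n)) /\ converges ipX u x /\ converges ipY v y.

Definition closed_op (X Y : lmodType C) (ipX : X -> X -> C) (ipY : Y -> Y -> C)
    (A : oprel X Y) : Prop :=
  forall (u : nat -> X) (v : nat -> Y) x y,
    (forall n, A (u n) (v n)) -> converges ipX u x -> converges ipY v y -> A x y.

Definition in_resolvent (X : lmodType C) (ip : X -> X -> C) (A : oprel X X)
    (l : C) : Prop :=
  [/\ single_valued A,
      (forall h, exists x y, A x y /\ y - l *: x = h),
      (forall x1 y1 x2 y2, A x1 y1 -> A x2 y2 ->
          y1 - l *: x1 = y2 - l *: x2 -> x1 = x2) &
      (exists c : C, forall x y, A x y -> hnorm ip x <= c * hnorm ip (y - l *: x))].

(* A_0 := T restricted to ker Gamma_0 *)
Definition restr_ker (H G : lmodType C) (T : oprel H H) (Gam0 : H -> G) : oprel H H :=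
  fun f y => T f y /\ Gam0 f = 0.

(* gamma(l) := (Gamma_0 restricted to ker (T - l))^{-1}, as a graph G -> H *)
Definition gamma_field (H G : lmodType C) (T : oprel H H) (Gam0 : H -> G)
    (l : C) : oprel G H :=
  fun phi f => T f (l *: f) /\ Gam0 f = phi.

Definition weyl (H G : lmodType C) (T : oprel H H) (Gam0 Gam1 : H -> G)
    (l : C) : oprel G G :=
  fun phi psi => exists f, gamma_field T Gam0 l phi f /\ psi = Gam1 f.

(* A_{B1 B2} f := T f on { f in dom T | Gamma_1 f in dom (B1 B2),
                                       B1 B2 Gamma_1 f = Gamma_0 f } *)
Definition ext_op (H G : lmodType C) (T : oprel H H) (Gam0 Gam1 : H -> G)
    (B1 B2 : oprel G G) : oprel H H :=
  fun f y => T f y /\ rcomp B1 B2 (Gam1 f) (Gam0 f).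

Definition linear_on (H G : lmodType C) (D : H -> Prop) (F : H -> G) : Prop :=
  forall (a : C) x y, D x -> D y -> F (a *: x + y) = a *: F x + F y.

End Defs.

(* Main.v *)
Require Import Defs.
From mathcomp Require Import all_boot all_order all_algebra.
From mathcomp Require Import reals classical_sets.
From mathcomp.real_closed Require Import complex.
From mathcomp Require Import ring lra.
From Stdlib Require Import ClassicalEpsilon Classical.
Import GRing.Theory Num.Theory.
Import Order.TTheory.
Local Open Scope ring_scope.
Local Notation "x %:C" := (real_complex _ x) (format "x %:C").

Set Implicit Arguments.
Unset Strict Implicit.
Unset Printing Implicit Defensive.

Section Cplx.
Variable R : realType.
Notation cRe := complex.Re.
Implicit Types (r s : R) (z w : R[i]).

Lemma RcM r s : (r * s)%:C = r%:C * s%:C :> R[i].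
Proof. by rewrite rmorphM. Qed.
Lemma RcD r s : (r + s)%:C = r%:C + s%:C :> R[i].
Proof. by rewrite rmorphD. Qed.
Lemma RcX r n : (r ^+ n)%:C = r%:C ^+ n :> R[i].
Proof. by rewrite rmorphXn. Qed.

Lemma ge0_Rc z : 0 <= z -> z = (complex.Re z)%:C.
Proof. by case: z => a b; rewrite lecE /= => /andP[/eqP -> _]. Qed.

Lemma sqrtC_Rc r : 0 <= r -> sqrtC (r%:C) = (Num.sqrt r)%:C.
Proof.
move=> r0; rewrite -{1}(sqr_sqrtr r0) RcX sqrCK //.
by rewrite ler0c sqrtr_ge0.
Qed.

Definition ab z : R := complex.Re `|z|.
Lemma abE z : `|z| = (ab z)%:C.
Proof. by rewrite /ab -ge0_Rc. Qed.
Lemma ab_ge0 z : 0 <= ab z.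
Proof. by rewrite -ler0c -abE. Qed.
Lemma abD z w : ab (z + w) <= ab z + ab w.
Proof. by rewrite -lecR RcD -!abE ler_normD. Qed.
Lemma abM z w : ab (z * w) = ab z * ab w.
Proof. by apply: complexI; rewrite RcM -!abE normrM. Qed.
Lemma abN z : ab (- z) = ab z.
Proof. by rewrite /ab normrN. Qed.
Lemma abJ z : ab (z^*) = ab z.
Proof. by rewrite /ab norm_conjC. Qed.
End Cplx.

Section IP.
Variable R : realType.
Notation C := R[i].
Notation cRe := complex.Re.
Variable V : lmodType C.
Variable ip : V -> V -> C.
Hypothesis Hip : is_inner_product ip.
Implicit Types (x y z : V) (a b : C).

Lemma ipLin a x y z : ip (a *: x + y) z = a * ip x z + ip y z.
Proof. by case: Hip. Qed.
Lemma ipC x y : ip x y = (ip y x)^*.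
Proof. by case: Hip. Qed.
Lemma ipxx_ge0 x : 0 <= ip x x.
Proof. by case: Hip. Qed.
Lemma ipxx_eq0 x : ip x x = 0 -> x = 0.
Proof. by case: Hip => _ _ _; apply. Qed.

Lemma ip0l y : ip 0 y = 0.
Proof.
have := ipLin 1 0 0 y; rewrite scaler0 addr0 mul1r => /eqP.
by rewrite -subr_eq subrr eq_sym => /eqP.
Qed.
Lemma ipDl x y z : ip (x + y) z = ip x z + ip y z.
Proof. by rewrite -(scale1r x) ipLin mul1r scale1r. Qed.
Lemma ipZl a x z : ip (a *: x) z = a * ip x z.
Proof. by rewrite -(addr0 (a *: x)) ipLin ip0l addr0. Qed.
Lemma ipNl x z : ip (- x) z = - ip x z.
Proof. by rewrite -scaleN1r ipZl mulN1r. Qed.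
Lemma ipBl x y z : ip (x - y) z = ip x z - ip y z.
Proof. by rewrite ipDl ipNl. Qed.
Lemma ip0r y : ip y 0 = 0.
Proof. by rewrite ipC ip0l conjC0. Qed.
Lemma ipDr x y z : ip z (x + y) = ip z x + ip z y.
Proof. by rewrite ipC ipDl rmorphD (ipC z x) (ipC z y). Qed.
Lemma ipZr a x z : ip z (a *: x) = a^* * ip z x.
Proof. by rewrite ipC ipZl rmorphM (ipC z x). Qed.
Lemma ipNr x z : ip z (- x) = - ip z x.
Proof. by rewrite ipC ipNl rmorphN (ipC z x). Qed.
Lemma ipBr x y z : ip z (x - y) = ip z x - ip z y.
Proof. by rewrite ipDr ipNr. Qed.

Definition N2 x : R := cRe (ip x x).
Lemma N2E x : ip x x = (N2 x)%:C.
Proof. exact/ge0_Rc/ipxx_ge0. Qed.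
Lemma N2_ge0 x : 0 <= N2 x.
Proof. by rewrite -ler0c -N2E ipxx_ge0. Qed.
Lemma N2_eq0 x : N2 x = 0 -> x = 0.
Proof. by move=> h; apply: ipxx_eq0; rewrite N2E h. Qed.

Definition nm x : R := Num.sqrt (N2 x).
Lemma nm_ge0 x : 0 <= nm x. Proof. exact: sqrtr_ge0. Qed.
Lemma nm_sqr x : nm x ^+ 2 = N2 x. Proof. exact/sqr_sqrtr/N2_ge0. Qed.
Lemma hnormE x : hnorm ip x = (nm x)%:C.
Proof. by rewrite /hnorm N2E sqrtC_Rc ?N2_ge0. Qed.
Lemma nm_eq0 x : nm x = 0 -> x = 0.
Proof. by move=> h; apply: N2_eq0; rewrite -nm_sqr h expr0n. Qed.
Lemma nm0 : nm 0 = 0.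
Proof. by rewrite /nm /N2 ip0l sqrtr0. Qed.

Lemma CS2 x y : `|ip x y| ^+ 2 <= ip x x * ip y y.
Proof.
have [->|y0] := eqVneq y 0; first by rewrite !ip0r normr0 expr0n /= mulr0.
set p := ip x y; set q := ip y y.
have qr : q = (N2 y)%:C by rewrite /q N2E.
have q0 : q != 0 by apply: contra y0 => /eqP /ipxx_eq0 ->.
have qgt0 : 0 < q by rewrite lt0r q0 ipxx_ge0.
have qJ : q^* = q by rewrite qr; exact: conjc_real.
set t := p / q.
have H0 := ipxx_ge0 (x - t *: y).
rewrite ipBl !ipBr !ipZl !ipZr in H0.
have Hyx : ip y x = p^* by rewrite ipC.
rewrite Hyx -/p -/q in H0.
have E : ip x x - t^* * p - (t * p^* - t * (t^* * q)) = ip x x - p * p^* / q.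
  have tJ : t^* = p^* / q.
    by rewrite /t rmorphM fmorphV; congr (_ * _); congr (_^-1); exact: qJ.
  rewrite tJ /t; field; exact: q0.
rewrite E subr_ge0 ler_pdivrMr // in H0.
by rewrite normCK.
Qed.

Lemma CS x y : ab (ip x y) <= nm x * nm y.
Proof.
have := CS2 x y; rewrite abE !N2E -RcX -RcM lecR => h.
rewrite /nm -sqrtrM ?N2_ge0 // -(ger0_norm (ab_ge0 (ip x y))) -sqrtr_sqr.
by rewrite ler_sqrt // mulr_ge0 ?N2_ge0.
Qed.


Lemma cReD (z w : C) : cRe (z + w) = cRe z + cRe w.
Proof. by case: z => ? ?; case: w. Qed.
Lemma cRe_le_ab (z : C) : cRe z <= ab z.
Proof.
have := normc_ge_Re z; rewrite abE lecR => h.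
exact: le_trans (ler_norm _) h.
Qed.
Lemma ab_Rc (r : R) : 0 <= r -> ab (r%:C) = r.
Proof. by move=> r0; rewrite /ab ger0_norm // ler0c. Qed.
Lemma ab_ipxx x : ab (ip x x) = N2 x.
Proof. by rewrite N2E ab_Rc ?N2_ge0. Qed.
Lemma ab_eq0 (z : C) : ab z = 0 -> z = 0.
Proof. by move=> h; apply/eqP; rewrite -normr_eq0 abE h. Qed.
Lemma ipC_ab x y : ab (ip x y) = ab (ip y x).
Proof. by rewrite ipC abJ. Qed.

Lemma N2D x y : N2 (x + y) = N2 x + N2 y + cRe (ip x y) + cRe (ip y x).
Proof. rewrite /N2 ipDl !ipDr !cReD; ring. Qed.

Lemma nmD x y : nm (x + y) <= nm x + nm y.
Proof.
have h1 := cRe_le_ab (ip x y); have h2 := cRe_le_ab (ip y x).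
have h3 := CS x y; rewrite ipC_ab in h2.
have e : N2 (x + y) <= (nm x + nm y) ^+ 2.
  rewrite N2D sqrrD !nm_sqr; lra.
rewrite /nm -(ger0_norm (addr_ge0 (nm_ge0 x) (nm_ge0 y))) -sqrtr_sqr.
by rewrite ler_sqrt // sqr_ge0.
Qed.

Lemma N2N x : N2 (- x) = N2 x.
Proof. by rewrite /N2 ipNl ipNr opprK. Qed.
Lemma nmN x : nm (- x) = nm x.
Proof. by rewrite /nm N2N. Qed.
Lemma nmB x y : nm (x - y) = nm (y - x).
Proof. by rewrite -nmN opprB. Qed.

Lemma N2Z a x : N2 (a *: x) = ab a ^+ 2 * N2 x.
Proof.
by apply: complexI; rewrite -N2E ipZl ipZr mulrA RcM -N2E RcX -abE normCK.
Qed.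
Lemma nmZ a x : nm (a *: x) = ab a * nm x.
Proof.
by rewrite /nm N2Z sqrtrM ?sqr_ge0 // sqrtr_sqr ger0_norm ?ab_ge0.
Qed.

Lemma nm_triB x y z : nm (x - z) <= nm (x - y) + nm (y - z).
Proof. have -> : x - z = (x - y) + (y - z) by rewrite addrA subrK. exact: nmD. Qed.

End IP.

Section Lim.
Variable R : realType.
Notation C := R[i].
Notation cRe := complex.Re.
Variable V : lmodType C.
Variable ip : V -> V -> C.
Hypothesis Hip : is_inner_product ip.
Implicit Types (x y z : V) (a b : C) (u v : nat -> V).
Local Notation nm := (nm ip).
Local Notation N2 := (N2 ip).

Definition conv u x := forall e : R, 0 < e ->
  exists N, forall n, (N <= n)%N -> nm (u n - x) < e.
Definition cauchy u := forall e : R, 0 < e ->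
  exists N, forall m n, (N <= m)%N -> (N <= n)%N -> nm (u m - u n) < e.

Lemma posC (e : C) : 0 < e -> e = (cRe e)%:C /\ 0 < cRe e.
Proof.
move=> h; split; first exact/ge0_Rc/ltW.
by move: h; case: e => a b; rewrite ltcE /= => /andP[].
Qed.
Lemma posR (e : R) : 0 < e -> 0 < e%:C :> C.
Proof. by move=> h; rewrite ltcE /= eqxx h. Qed.

Lemma convergesP u x : converges ip u x <-> conv u x.
Proof.
split=> h e e0.
- have [N HN] := h _ (posR e0); exists N => n /HN.
  by rewrite hnormE // ltcR.
- have [E e0'] := posC e0; have [N HN] := h _ e0'; exists N => n /HN.
  by rewrite hnormE // E ltcR.
Qed.
Lemma cauchyP u : cauchy_seq ip u <-> cauchy u.
Proof.
split=> h e e0.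
- have [N HN] := h _ (posR e0); exists N => m n hm hn.
  by have := HN m n hm hn; rewrite hnormE // ltcR.
- have [E e0'] := posC e0; have [N HN] := h _ e0'; exists N => m n hm hn.
  by rewrite hnormE // E ltcR; apply: HN.
Qed.
Lemma denseP (D : V -> Prop) : dense ip D <->
  (forall x (e : R), 0 < e -> exists y, D y /\ nm (x - y) < e).
Proof.
split=> h x e e0.
- have [y [Dy Hy]] := h x _ (posR e0); exists y; split=> //.
  by move: Hy; rewrite hnormE // ltcR.
- have [E e0'] := posC e0; have [y [Dy Hy]] := h x _ e0'; exists y; split=> //.
  by rewrite hnormE // E ltcR.
Qed.

Lemma small_ab (c : C) : (forall e : R, 0 < e -> ab c < e) -> c = 0.
Proof.
move=> h; apply: ab_eq0; apply/eqP; rewrite eq_le ab_ge0 andbT.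
apply/negP => /negP; rewrite -ltNge => hc.
by have := h _ hc; rewrite ltxx.
Qed.

Lemma le_eps (a b : R) : (forall e : R, 0 < e -> a <= b + e) -> a <= b.
Proof. by move=> h; apply/ler_addgt0Pr. Qed.

Lemma conv_le u x y (B : R) n0 : conv u x ->
  (forall m, (n0 <= m)%N -> nm (u m - y) <= B) -> nm (x - y) <= B.
Proof.
move=> cu hB; apply: le_eps => e e0.
have [N HN] := cu e e0.
have h1 := HN (maxn N n0) (leq_maxl _ _).
have h2 := hB (maxn N n0) (leq_maxr _ _).
have h3 := nm_triB Hip x (u (maxn N n0)) y.
rewrite nmB // in h1; lra.
Qed.

Lemma orth_dense (D : V -> Prop) d : dense ip D ->
  (forall p, D p -> ip p d = 0) -> d = 0.
Proof.
move=> /denseP hD hd; apply: (nm_eq0 Hip).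
apply/eqP; rewrite eq_le nm_ge0 // andbT; apply/negP => /negP.
rewrite -ltNge => hn.
have [p [Dp Hp]] := hD d _ hn.
have e : ip d d = ip (d - p) d by rewrite ipBl // (hd p Dp) subr0.
have := CS Hip (d - p) d; rewrite -e ab_ipxx // -(nm_sqr Hip) expr2 => h.
have : nm (d - p) * nm d < nm d * nm d by rewrite ltr_pM2r.
by rewrite ltNge h.
Qed.

Lemma adj_closed (A : oprel V V) : closed_op ip ip (adjoint ip ip A).
Proof.
move=> u v x y huv /convergesP cu /convergesP cv a w Aaw.
apply/eqP; rewrite -subr_eq0; apply/eqP; apply: small_ab => e e0.
set K := nm w + nm a + 1.
have K0 : 0 < K by rewrite /K; have := nm_ge0 ip w; have := nm_ge0 ip a; lra.
have e1 : 0 < e / (2 * K) by rewrite divr_gt0 // mulr_gt0.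
have [N1 H1] := cu _ e1; have [N2 H2] := cv _ e1.
set n := maxn N1 N2.
have h1 := H1 n (leq_maxl _ _); have h2 := H2 n (leq_maxr _ _).
have E : ip w x - ip a y = ip w (x - u n) - ip a (y - v n).
  by rewrite !ipBr // (huv n a w Aaw); ring.
rewrite E; apply: le_lt_trans (abD _ _) _; rewrite abN.
have c1 := CS Hip w (x - u n); have c2 := CS Hip a (y - v n).
rewrite nmB // in h1; rewrite nmB // in h2.
have hw := nm_ge0 ip w; have ha := nm_ge0 ip a.
have eK : e / (2 * K) * (2 * K) = e by field; rewrite /K; lra.
have q1 : nm w * nm (x - u n) < K * (e / (2 * K)).
  apply: le_lt_trans (_ : K * nm (x - u n) < _).
    by rewrite ler_wpM2r ?nm_ge0 // /K; lra.
  by rewrite ltr_pM2l.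
have q2 : nm a * nm (y - v n) <= K * (e / (2 * K)).
  apply: le_trans (_ : K * nm (y - v n) <= _).
    by rewrite ler_wpM2r ?nm_ge0 // /K; lra.
  by rewrite ler_wpM2l ?(ltW K0) // ltW.
have q3 : K * (e / (2 * K)) = e / 2 by field; rewrite /K; lra.
lra.
Qed.

End Lim.

Lemma inv_nat_le (R : realType) (i N : nat) : (N <= i)%N -> (i.+1%:R : R)^-1 <= (N.+1%:R)^-1.
Proof. by move=> h; rewrite lef_pV2 ?posrE ?ltr0Sn // ler_nat ltnS. Qed.
Lemma inv_nat_gt0 (R : realType) (i : nat) : 0 < (i.+1%:R : R)^-1.
Proof. by rewrite invr_gt0 ltr0Sn. Qed.
Lemma small_inv (R : realType) (e : R) : 0 < e -> exists N : nat, (N.+1%:R : R)^-1 < e.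
Proof.
move=> e0; exists (Num.Def.archi_bound e^-1).
have e1 : 0 <= e^-1 by rewrite invr_ge0 ltW.
have h := archi_boundP e1.
rewrite -[e in _ < e](invrK e) ltf_pV2 ?posrE ?invr_gt0 ?ltr0Sn //.
apply: lt_trans h _; rewrite ltr_nat; done.
Qed.

Section Proj.
Variable R : realType.
Notation C := R[i].
Notation cRe := complex.Re.
Variable V : lmodType C.
Variable ip : V -> V -> C.
Hypothesis Hip : is_inner_product ip.
Hypothesis Hcomp : forall u, cauchy_seq ip u -> exists x, converges ip u x.
Implicit Types (x y z : V) (a b : C).
Local Notation nm := (nm ip).
Local Notation N2 := (N2 ip).
Local Notation conv := (conv ip).
Local Notation cauchy := (cauchy ip).

Lemma completeR (u : nat -> V) : cauchy u -> exists x, conv u x.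
Proof. by move=> /(cauchyP Hip) /Hcomp [x /(convergesP Hip) h]; exists x. Qed.

Lemma cReN (z : C) : cRe (- z) = - cRe z. Proof. by case: z. Qed.

Lemma paral x y : N2 (x + y) + N2 (x - y) = 2 * N2 x + 2 * N2 y.
Proof. rewrite !(N2D Hip) (N2N Hip) (ipNr Hip) (ipNl Hip) !cReN; ring. Qed.

Lemma ip_projC x y : y != 0 ->
  ip (x - (ip x y / ip y y) *: y) (x - (ip x y / ip y y) *: y) =
  ip x x - ip x y * (ip x y)^* / ip y y.
Proof.
move=> y0.
set p := ip x y; set q := ip y y.
have qr : q = (N2 y)%:C by rewrite /q N2E.
have q0 : q != 0 by apply: contra y0 => /eqP /(ipxx_eq0 Hip) ->.
have qJ : q^* = q by rewrite qr; exact: conjc_real.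
set t := p / q.
rewrite (ipBl Hip) !(ipBr Hip) !(ipZl Hip) !(ipZr Hip).
have Hyx : ip y x = p^* by rewrite (ipC Hip).
rewrite Hyx -/p -/q.
have tJ : t^* = p^* / q.
  by rewrite /t rmorphM fmorphV; congr (_ * _); congr (_^-1); exact: qJ.
rewrite tJ /t; field; exact: q0.
Qed.

Lemma N2_gt0 y : y != 0 -> 0 < N2 y.
Proof.
move=> y0; rewrite lt0r N2_ge0 // andbT; apply: contra y0 => /eqP h.
by rewrite (N2_eq0 Hip h).
Qed.

Lemma N2_proj x y : y != 0 ->
  N2 (x - (ip x y / ip y y) *: y) = N2 x - ab (ip x y) ^+ 2 / N2 y.
Proof.
move=> y0; apply: complexI.
rewrite -N2E // ip_projC // rmorphB rmorphM fmorphV /= RcX -abE normCK -!N2E //.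
Qed.

Lemma proj_full (M : V -> Prop) :
  M 0 -> (forall a x y, M x -> M y -> M (a *: x + y)) ->
  (forall u x, (forall n, M (u n)) -> conv u x -> M x) ->
  (forall d, (forall m, M m -> ip m d = 0) -> d = 0) -> forall u, M u.
Proof.
move=> M0 Mlin Mcl Mperp u.
pose E : set R := fun r => exists m, M m /\ r = N2 (u - m).
have hne : (E !=set0)%classic by exists (N2 (u - 0)); exists 0.
have hlb : has_lbound E by exists 0 => r [m [_ ->]]; exact: N2_ge0.
pose d := inf E.
have d0 : 0 <= d by apply: lb_le_inf hne _ => r [m [_ ->]]; exact: N2_ge0.
have Hlow : forall m, M m -> d <= N2 (u - m).
  by move=> m Mm; apply: (ge_inf hlb); exists m.
have Happ : forall e : R, 0 < e -> exists m, M m /\ N2 (u - m) < d + e.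
  move=> e e0; have [r [m [Mm ->]] hr] := inf_adherent e0 (conj hne hlb).
  by exists m.
have Hseq : forall n : nat, {m | M m /\ N2 (u - m) < d + (n.+1%:R)^-1}.
  move=> n; apply: constructive_indefinite_description.
  exact: Happ _ (inv_nat_gt0 _ n).
pose ms n := sval (Hseq n).
have Ms n : M (ms n) by rewrite /ms; case: (Hseq n) => ? [].
have Ns n : N2 (u - ms n) < d + (n.+1%:R)^-1 by rewrite /ms; case: (Hseq n) => ? [].
have Hmid : forall i j, N2 (ms j - ms i) <= 2 * (i.+1%:R)^-1 + 2 * (j.+1%:R)^-1.
  move=> i j.
  pose w := u - 2^-1 *: (ms i + ms j).
  have Mw : M (2^-1 *: (ms i + ms j)).
    have hj : M (2^-1 *: ms j + 0) := Mlin _ _ _ (Ms j) M0.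
    rewrite addr0 in hj.
    by rewrite scalerDr; exact: (Mlin _ _ _ (Ms i) hj).
  have hw : d <= N2 w := Hlow _ Mw.
  have e1 : (u - ms i) + (u - ms j) = (2%:R : C) *: w.
    rewrite /w scalerBr scalerA mulfV ?pnatr_eq0 // scale1r scaler_nat mulr2n.
    by rewrite opprD addrACA.
  have e2 : (u - ms i) - (u - ms j) = ms j - ms i.
    by rewrite opprB addrC addrA subrK.
  have := paral (u - ms i) (u - ms j); rewrite e1 e2 (N2Z Hip).
  rewrite -(rmorph_nat (real_complex R) 2) ab_Rc ?ler0n //.
  rewrite expr2; have := Ns i; have := Ns j; move: hw; clearbody w; set a1 := (i.+1%:R : R)^-1; set a2 := (j.+1%:R : R)^-1; lra.
have cau : cauchy ms.
  move=> e e0.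
  have e2 : 0 < e ^+ 2 / 4 by rewrite divr_gt0 // exprn_gt0.
  have [N HN] := small_inv e2.
  exists N => i j hi hj.
  have := Hmid j i; have := inv_nat_le R hi; have := inv_nat_le R hj.
  rewrite -(nm_sqr Hip) => h1 h2 h3.
  set a1 := (i.+1%:R : R)^-1 in h1 h2 h3; set a2 := (j.+1%:R : R)^-1 in h1 h2 h3; set a3 := (N.+1%:R : R)^-1 in h1 h2 HN.
  have h4 : nm (ms i - ms j) ^+ 2 < e ^+ 2 by lra.
  have := nm_ge0 ip (ms i - ms j); nra.
have [p cp] := completeR cau.
have Mp : M p := Mcl _ _ Ms cp.
have Hup : N2 (u - p) <= d.
  apply: le_eps => e e0.
  set K := 2 * d + 5.
  have K0 : 0 < K by rewrite /K; lra.
  have e1 : 0 < e / 2 by lra.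
  have [N1 HN1] := small_inv e1.
  have eK : 0 < e / (2 * K) by rewrite divr_gt0 // mulr_gt0.
  have [N2' H2'] := cp _ eK.
  have [N3 H3] := cp _ ltr01.
  set n := maxn N1 (maxn N2' N3).
  have hn1 : (N1 <= n)%N by rewrite leq_maxl.
  have hn2 : (N2' <= n)%N by rewrite /n (leq_trans (leq_maxl N2' N3)) // leq_maxr.
  have hn3 : (N3 <= n)%N by rewrite /n (leq_trans (leq_maxr N2' N3)) // leq_maxr.
  have hb1 := H2' n hn2; have hb2 := H3 n hn3.
  have ht := inv_nat_le R hn1.
  have ht1 : (n.+1%:R : R)^-1 <= 1 by rewrite invf_le1 ?ler1n ?ltr0Sn.
  have hA := Ns n; rewrite -(nm_sqr Hip) in hA.
  have tri := nm_triB Hip u (ms n) p.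
  set A := nm (u - ms n) in hA tri.
  set b := nm (ms n - p) in hb1 hb2 tri.
  set t := (n.+1%:R : R)^-1 in hA ht ht1.
  have A0 : 0 <= A := nm_ge0 ip _.
  have b0 : 0 <= b := nm_ge0 ip _.
  have up0 := nm_ge0 ip (u - p).
  have s1 : A <= d + 2 by nra.
  have s2 : nm (u - p) ^+ 2 <= (A + b) ^+ 2 by nra.
  have s3 : b * K < e / 2.
    have : b * (2 * K) < e by rewrite -ltr_pdivlMr // mulr_gt0.
    lra.
  have s4 : b * A <= b * (d + 2) by rewrite ler_wpM2l.
  have s5 : b * b <= b by nra.
  have ex : (A + b) ^+ 2 = A ^+ 2 + 2 * (b * A) + b * b by ring.
  have s6 : b * (d + 2) = b * d + 2 * b by ring.
  have s7 : b * K = 2 * (b * d) + 5 * b by rewrite /K; ring.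
  set a3 := (N1.+1%:R : R)^-1 in HN1 ht.
  rewrite -(nm_sqr Hip); lra.
have Horth : forall m, M m -> ip (u - p) m = 0.
  move=> m Mm; case: (eqVneq (ip (u - p) m) 0) => // hne0.
  have m0 : m != 0 by apply: contra_neq hne0 => ->; rewrite ip0r.
  set t := ip (u - p) m / ip m m.
  have Mq : M (t *: m + p) := Mlin _ _ _ Mm Mp.
  have := Hlow _ Mq.
  have -> : u - (t *: m + p) = (u - p) - t *: m by rewrite opprD addrCA addrC.
  rewrite N2_proj //.
  have hN := N2_gt0 m0.
  have ha : 0 < ab (ip (u - p) m).
    rewrite lt0r ab_ge0 andbT; apply: contra hne0 => /eqP /ab_eq0 ->; done.
  have : 0 < ab (ip (u - p) m) ^+ 2 / N2 m by rewrite divr_gt0 // exprn_gt0.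
  move=> h1 h2; exfalso; lra.
have v0 := Mperp (u - p) (fun m Mm => etrans (ipC Hip _ _) (etrans (congr1 _ (Horth m Mm)) (conjC0 _))).
by move/eqP: v0; rewrite subr_eq0 => /eqP ->.
Qed.

End Proj.

Lemma nat_le_pow3 (R : realType) (N : nat) : (N.+1%:R : R) <= 3 ^+ N.+1.
Proof.
elim: N => [|N IH]; first by rewrite expr1 ler_nat.
rewrite exprS -natr1.
have : 1 <= (3 : R) ^+ N.+1 by rewrite exprn_ege1 // ler1n.
lra.
Qed.

Section UBP.
Variable R : realType.
Notation C := R[i].
Notation cRe := complex.Re.
Variable V : lmodType C.
Variable ip : V -> V -> C.
Hypothesis Hip : is_inner_product ip.
Hypothesis Hcomp : forall u, cauchy_seq ip u -> exists x, converges ip u x.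
Local Notation nm := (nm ip).
Local Notation N2 := (N2 ip).
Local Notation conv := (conv ip).
Local Notation cauchy := (cauchy ip).

Lemma ab_ipZr (s : R) (a : V) : ab (ip a ((s%:C) *: a)) = `|s| * N2 a.
Proof.
have -> : ip a (s%:C *: a) = (s * N2 a)%:C.
  by rewrite (ipZr Hip) (N2E Hip) RcM; congr (_ * _); exact: conjc_real.
by rewrite /ab normc_def /= expr0n /= addr0 sqrtr_sqr normrM (ger0_norm (N2_ge0 Hip a)).
Qed.

Lemma ubp (P : V -> Prop) :
  (forall k, exists M : R, forall a, P a -> ab (ip a k) <= M) ->
  exists c : R, forall a, P a -> nm a <= c.
Proof.
move=> Hb; apply: NNPP => hn.
have hex : forall c : R, exists a, P a /\ c < nm a.
  move=> c; apply: NNPP => h; apply: hn; exists c => a Pa.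
  rewrite leNgt; apply/negP => hc; apply: h; exists a; split=> //.
pose r (n : nat) : R := (3^-1) ^+ n.+1.
have r0 n : 0 < r n by rewrite /r exprn_gt0 // invr_gt0.
have rS n : r n = 3 * r n.+1.
  by rewrite /r [X in _ = _ * X]exprS mulrA divff ?mul1r // pnatr_eq0.
pose K (n : nat) : R := 2 * n.+1%:R / r n.
have K0 n : 0 < K n by rewrite /K divr_gt0 // mulr_gt0 // ltr0Sn.
have Hsel n : {a | P a /\ K n < nm a}.
  exact: constructive_indefinite_description (hex (K n)).
pose a n := sval (Hsel n).
have Pa n : P (a n) by rewrite /a; case: (Hsel n) => ? [].
have Ka n : K n < nm (a n) by rewrite /a; case: (Hsel n) => ? [].
have na0 n : 0 < nm (a n) := lt_trans (K0 n) (Ka n).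
pose kp n : V := ((r n / nm (a n))%:C) *: a n.
have abk n : ab (ip (a n) (kp n)) = r n * nm (a n).
  rewrite ab_ipZr ger0_norm ?divr_ge0 ?ltW // -(nm_sqr Hip) expr2.
  by field; apply/lt0r_neq0.
have nmk n : nm (kp n) = r n.
  rewrite (nmZ Hip) ab_Rc ?divr_ge0 ?ltW //.
  by field; apply/lt0r_neq0.
pose step (y : V) (n : nat) := if ab (ip (a n) (y - kp n)) <= ab (ip (a n) (y + kp n))
  then y + kp n else y - kp n.
have step_big y n : r n * nm (a n) <= ab (ip (a n) (step y n)).
  have e : ip (a n) (y + kp n) - ip (a n) (y - kp n) = 2 * ip (a n) (kp n).
    by rewrite (ipDr Hip) (ipBr Hip); ring.
  have h1 := abD (ip (a n) (y + kp n)) (- ip (a n) (y - kp n)).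
  have h2 : ab (2 : C) = 2 by rewrite -(rmorph_nat (real_complex R) 2) ab_Rc ?ler0n.
  rewrite e abN abM h2 abk in h1.
  rewrite /step; case: ifP => hc; lra.
have step_dist y n : nm (step y n - y) = r n.
  rewrite /step; case: ifP => _.
    by rewrite addrC addKr nmk.
  by rewrite addrC addKr nmN // nmk.
pose xs := fix xs (n : nat) := match n with 0 => step 0 0 | m.+1 => step (xs m) m.+1 end.
have xsS n : xs n.+1 = step (xs n) n.+1 by [].
have xs_big n : r n * nm (a n) <= ab (ip (a n) (xs n)) by case: n => [|n] /=; apply: step_big.
have dist n k : nm (xs (n + k)%N - xs n) <= r n / 2 - r (n + k)%N / 2.
  elim: k => [|k IH]; first by rewrite addn0 subrr nm0 // subrr.
  rewrite addnS xsS.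
  have := nm_triB Hip (step (xs (n + k)%N) (n + k).+1) (xs (n + k)%N) (xs n).
  rewrite step_dist.
  have := rS (n + k)%N; lra.
have distm n m : (n <= m)%N -> nm (xs m - xs n) <= r n / 2.
  move=> hnm; rewrite -(subnKC hnm).
  have := dist n (m - n)%N; have := r0 (n + (m - n))%N; lra.
have rsmall N : r N <= (N.+1%:R)^-1.
  rewrite /r exprVn lef_pV2 ?posrE ?ltr0Sn ?exprn_gt0 //.
  exact: nat_le_pow3.
have cau : cauchy xs.
  move=> e e0; have [N HN] := small_inv e0; exists N => m n hm hn'.
  have := nm_triB Hip (xs m) (xs N) (xs n).
  have := distm _ _ hm; have := distm _ _ hn'; rewrite (nmB Hip (xs N)).
  have := rsmall N; move: HN; set a3 := (N.+1%:R : R)^-1; lra.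
have [x cx] := completeR Hip Hcomp cau.
have xb n : nm (x - xs n) <= r n / 2.
  by apply: (conv_le Hip (n0 := n) cx) => m hm; apply: distm.
have [Mx HMx] := Hb x.
have Mx0 : 0 <= Mx := le_trans (ab_ge0 _) (HMx _ (Pa 0%N)).
set n := Num.Def.archi_bound Mx.
have hn0 : Mx < n%:R := archi_boundP Mx0.
have big : n.+1%:R < ab (ip (a n) x).
  have e : ip (a n) (xs n) = ip (a n) x + - ip (a n) (x - xs n).
    by rewrite (ipBr Hip); ring.
  have h1 := abD (ip (a n) x) (- ip (a n) (x - xs n)); rewrite -e abN in h1.
  have h2 := xs_big n.
  have h3 := CS Hip (a n) (x - xs n).
  have h4 : nm (a n) * nm (x - xs n) <= nm (a n) * (r n / 2).
    by rewrite ler_wpM2l ?nm_ge0.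
  have h5 : r n * K n < r n * nm (a n) by rewrite ltr_pM2l.
  have h6 : r n * K n = 2 * n.+1%:R by rewrite /K; field; apply/lt0r_neq0.
  lra.
have := HMx _ (Pa n).
have : n%:R < (n.+1%:R : R) by rewrite ltr_nat.
lra.
Qed.

End UBP.

Section LinHelp.
Variable R : realType.
Notation C := R[i].
Variables X Y : lmodType C.

Lemma lo_add (D : X -> Prop) (F : X -> Y) x y :
  linear_on D F -> D x -> D y -> F (x + y) = F x + F y.
Proof. by move=> h Dx Dy; have := h 1 x y Dx Dy; rewrite !scale1r. Qed.
Lemma lo_0 (D : X -> Prop) (F : X -> Y) :
  linear_on D F -> D 0 -> F 0 = 0.
Proof.
move=> h D0; have := lo_add h D0 D0; rewrite addr0 => /eqP.
by rewrite -subr_eq subrr eq_sym => /eqP.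
Qed.
Lemma lo_scale (D : X -> Prop) (F : X -> Y) a x :
  linear_on D F -> D 0 -> D x -> F (a *: x) = a *: F x.
Proof. by move=> h D0 Dx; have := h a x 0 Dx D0; rewrite !addr0 (lo_0 h D0) addr0. Qed.
Lemma lo_sub (D : X -> Prop) (F : X -> Y) x y :
  linear_on D F -> D x -> D y -> F (x - y) = F x - F y.
Proof.
move=> h Dx Dy; have := h (-1) y x Dy Dx.
by rewrite !scaleN1r addrC [- F y + _]addrC.
Qed.

Lemma lop_add (A : oprel X Y) x1 y1 x2 y2 :
  linear_op A -> A x1 y1 -> A x2 y2 -> A (x1 + x2) (y1 + y2).
Proof. by case=> _ _ h h1 h2; have := h 1 _ _ _ _ h1 h2; rewrite !scale1r. Qed.
Lemma lop_sub (A : oprel X Y) x1 y1 x2 y2 :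
  linear_op A -> A x1 y1 -> A x2 y2 -> A (x1 - x2) (y1 - y2).
Proof.
case=> _ _ h h1 h2; have := h (-1) _ _ _ _ h2 h1.
by rewrite !scaleN1r addrC [- y2 + _]addrC.
Qed.
Lemma lop_scale (A : oprel X Y) a x y :
  linear_op A -> A x y -> A (a *: x) (a *: y).
Proof. by case=> _ h0 h h1; have := h a _ _ _ _ h1 h0; rewrite !addr0. Qed.
Lemma lop_0 (A : oprel X Y) : linear_op A -> A 0 0.
Proof. by case. Qed.
End LinHelp.

Lemma vec_id1 (R : realType) (X : lmodType R[i]) (k a b : X) : k - (k - a + b) = a - b.
Proof. by rewrite opprD opprB addrA [k + _]addrC subrK. Qed.

Section Gen.
Variable R : realType.
Notation C := R[i].
Variables H G : lmodType C.
Variables (ipH : H -> H -> C) (ipG : G -> G -> C).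
Hypotheses (HipH : is_inner_product ipH) (HipG : is_inner_product ipG).

Lemma total_gamma (Tt : oprel H H) (Gamt0 : H -> G) (nu : C) :
  linear_op Tt -> linear_on (dom Tt) Gamt0 ->
  (forall h, exists g k, restr_ker Tt Gamt0 g k /\ k - nu *: g = h) ->
  dense ipG (fun phi => exists g, dom Tt g /\ Gamt0 g = phi) ->
  forall z, (forall phi f, gamma_field Tt Gamt0 nu phi f -> ipG phi z = 0) -> z = 0.
Proof.
move=> linTt linG0 surj dens z hz.
apply: (orth_dense HipG dens) => _ [g [[k Tgk] <-]].
have [g0 [k0 [[Tg0 G0] e]]] := surj (k - nu *: g).
apply: (hz _ (g - g0)); split.
- have := lop_sub linTt Tgk Tg0.
  have -> : k0 = k - nu *: g + nu *: g0 by rewrite -e subrK.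
  by rewrite vec_id1 scalerBr.
- by rewrite (lo_sub linG0) ?G0 ?subr0 //; [exists k | exists k0].
Qed.

Lemma genS (T Tt : oprel H H) (Gam0 Gam1 Gamt0 Gamt1 : H -> G) (mu nu : C)
  (B1 B2 : oprel G G) :
  linear_op T -> linear_on (dom T) Gam0 -> linear_on (dom T) Gam1 ->
  linear_op B2 ->
  (forall f g Tf Ttg, T f Tf -> Tt g Ttg ->
      ipH Tf g - ipH f Ttg = ipG (Gam1 f) (Gamt0 g) - ipG (Gam0 f) (Gamt1 g)) ->
  nu^* = mu ->
  (forall h, exists x y, restr_ker T Gam0 x y /\ y - mu *: x = h) ->
  (forall z, (forall phi f, gamma_field Tt Gamt0 nu phi f -> ipG phi z = 0) -> z = 0) ->
  (forall f : H, exists z : G,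
      adjoint ipG ipH (gamma_field Tt Gamt0 nu) f z /\
      exists w, B2 z w /\
        ran (id_minus (rcomp B2 (rcomp (weyl T Gam0 Gam1 mu) B1))) w) ->
  forall h, exists x y, ext_op T Gam0 Gam1 B1 B2 x y /\ y - mu *: x = h.
Proof.
move=> linT linG0 linG1 linB2 green nuJ surj tot hyp h.
have [x0 [y0 [[Tx0 G0x0] e0]]] := surj h.
have [z [adjz [w [B2zw [psi [v [[m [[a [B1psia [f1 [[Tf1 Gf1] me]]]] B2mv]] we]]]]]]] := hyp h.
have zE : z = Gam1 x0.
  apply/eqP; rewrite -subr_eq0; apply/eqP; apply: tot => phi f [Tf Gf].
  have := green _ _ _ _ Tx0 Tf.
  rewrite G0x0 Gf (ip0l HipG) subr0 (ipZr HipH) nuJ -(ipZl HipH) -(ipBl HipH) e0 => E.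
  rewrite (ipBr HipG) -(adjz _ _ (conj Tf Gf)) (ipC HipG) -E -(ipC HipH) subrr //.
exists (x0 + f1), (y0 + mu *: f1); split; last first.
  by rewrite scalerDr opprD addrACA subrr addr0.
split; first exact: lop_add linT Tx0 Tf1.
have dx0 : dom T x0 by exists y0.
have df1 : dom T f1 by exists (mu *: f1).
exists psi; split.
- rewrite (lo_add linG1) // -zE -me.
  have := lop_add linB2 B2zw B2mv; rewrite we subrK //.
- by rewrite (lo_add linG0) // G0x0 add0r Gf1.
Qed.
End Gen.

Section Lim2.
Variable R : realType.
Notation C := R[i].
Notation cRe := complex.Re.
Variable V : lmodType C.
Variable ip : V -> V -> C.
Hypothesis Hip : is_inner_product ip.
Local Notation nm := (nm ip).
Local Notation conv := (conv ip).
Local Notation cauchy := (cauchy ip).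

Lemma conv_cauchy (u : nat -> V) x : conv u x -> cauchy u.
Proof.
move=> cu e e0; have e2 : 0 < e / 2 by lra.
have [N HN] := cu _ e2; exists N => m n hm hn.
have := nm_triB Hip (u m) x (u n); have := HN m hm; have := HN n hn.
rewrite (nmB Hip x); lra.
Qed.

Lemma conv_lin (u v w : nat -> V) x y (a : C) :
  conv u x -> conv v y -> (forall n, w n = u n + a *: v n) -> conv w (x + a *: y).
Proof.
move=> cu cv hw e e0.
set K := ab a + 1.
have K0 : 0 < K by rewrite /K; have := ab_ge0 a; lra.
have e2 : 0 < e / 2 by lra.
have e3 : 0 < e / (2 * K) by rewrite divr_gt0 // mulr_gt0.
have [N1 H1] := cu _ e2; have [N2 H2] := cv _ e3.
exists (maxn N1 N2) => n hn.
have h1 := H1 n (leq_trans (leq_maxl _ _) hn).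
have h2 := H2 n (leq_trans (leq_maxr _ _) hn).
have E : w n - (x + a *: y) = (u n - x) + a *: (v n - y).
  by rewrite hw scalerBr opprD addrACA.
rewrite E; apply: le_lt_trans (nmD Hip _ _) _; rewrite (nmZ Hip).
have q : ab a * nm (v n - y) <= K * nm (v n - y).
  by rewrite ler_wpM2r ?nm_ge0 // /K; lra.
have q2 : K * nm (v n - y) < K * (e / (2 * K)) by rewrite ltr_pM2l.
have q3 : K * (e / (2 * K)) = e / 2 by field; rewrite /K; have := ab_ge0 a; lra.
lra.
Qed.

Lemma boundR (a b : R) (c : C) : 0 <= b -> a%:C <= c * b%:C -> a <= `|cRe c| * b.
Proof.
move=> b0; rewrite lecE => /andP[_ h].
have e : forall c' : C, cRe (c' * b%:C) = cRe c' * b.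
  by case=> ? ? /=; rewrite mulr0 subr0.
rewrite e /= in h; apply: le_trans h _.
by rewrite ler_wpM2r // ler_norm.
Qed.
End Lim2.

Lemma vec_id2 (R : realType) (X : lmodType R[i]) (a c : R[i]) (k1 k2 g1 g2 : X) :
  (a *: k1 + k2) - c *: (a *: g1 + g2) = a *: (k1 - c *: g1) + (k2 - c *: g2).
Proof.
by rewrite scalerDr !scalerA scalerBr scalerA [c * a]mulrC opprD addrACA.
Qed.

Lemma vec_id3 (X : zmodType) (x y a b : X) : (x + a) - (y + b) - (a - b) = x - y.
Proof. by rewrite (opprD y b) (addrACA x a) addrK. Qed.

Section K2.
Variable R : realType.
Notation C := R[i].
Notation cRe := complex.Re.
Variables H : lmodType C.
Variables (ipH : H -> H -> C).
Hypotheses (hilH : is_hilbert ipH).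

Lemma K2 (T Tt : oprel H H) (G : lmodType C) (Gam0 Gamt0 : H -> G) (l : C) :
  linear_op T -> linear_on (dom T) Gam0 ->
  linear_op Tt -> linear_on (dom Tt) Gamt0 ->
  releq (adjoint ipH ipH (restr_ker T Gam0)) (restr_ker Tt Gamt0) ->
  releq (adjoint ipH ipH (restr_ker Tt Gamt0)) (restr_ker T Gam0) ->
  in_resolvent ipH (restr_ker T Gam0) l ->
  forall h, exists g k, restr_ker Tt Gamt0 g k /\ k - l^* *: g = h.
Proof.
case: hilH => HipH Hcomp.
move=> linT linG0 linTt linGt0 M1 M2 [sv0 surj0 inj0 [c bnd]].
set A0 := restr_ker T Gam0; set At0 := restr_ker Tt Gamt0.
have A00 : A0 0 0.
  by split; [exact: lop_0 linT | apply: (lo_0 linG0); exists 0; exact: lop_0].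
have At00 : At0 0 0.
  by split; [exact: lop_0 linTt | apply: (lo_0 linGt0); exists 0; exact: lop_0].
set K := `|cRe c|.
have K0 : 0 <= K by rewrite /K normr_ge0.
have bnd' : forall x y, A0 x y -> nm ipH x <= K * nm ipH (y - l *: x).
  move=> x y Axy; apply: boundR; first exact: nm_ge0.
  by rewrite -!(hnormE HipH); apply: bnd.
have bb : forall d e, adjoint ipH ipH A0 d e -> nm ipH d <= K * nm ipH (e - l^* *: d).
  move=> d e ade; have [x0 [y0 [Ax0 e0]]] := surj0 d.
  have E : ipH d d = ipH x0 (e - l^* *: d).
    rewrite (ipBr HipH) (ipZr HipH) conjCK -(ade _ _ Ax0) -{1}e0.
    by rewrite (ipBl HipH) (ipZl HipH).
  have h1 := CS HipH x0 (e - l^* *: d); rewrite -E (ab_ipxx HipH) -(nm_sqr HipH) in h1.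
  have h2 := bnd' _ _ Ax0; rewrite e0 in h2.
  set nd := nm ipH d in h1 h2 *; set ne := nm ipH (e - l^* *: d) in h1 *.
  set nx := nm ipH x0 in h1 h2.
  have nd0 : 0 <= nd := nm_ge0 ipH d.
  have ne0 : 0 <= ne := nm_ge0 ipH _.
  have h3 : nx * ne <= K * nd * ne by rewrite ler_wpM2r.
  have [nd00|ndp] := eqVneq nd 0; first by rewrite nd00 mulr_ge0.
  have ndp' : 0 < nd by rewrite lt0r ndp nd0.
  rewrite -(ler_pM2r ndp'); rewrite expr2 in h1; lra.
have adjlin : forall d1 e1 d2 e2, adjoint ipH ipH A0 d1 e1 -> adjoint ipH ipH A0 d2 e2 ->
    adjoint ipH ipH A0 (d1 - d2) (e1 - e2).
  by move=> d1 e1 d2 e2 h1 h2 x w Axw; rewrite !(ipBr HipH) (h1 _ _ Axw) (h2 _ _ Axw).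
pose M := fun h => exists g k, At0 g k /\ k - l^* *: g = h.
apply: (proj_full HipH Hcomp (M := M)).
- by exists 0, 0; split=> //; rewrite scaler0 subr0.
- move=> a x y [g1 [k1 [A1 e1]]] [g2 [k2 [A2 e2]]].
  exists (a *: g1 + g2), (a *: k1 + k2); split; last by rewrite vec_id2 e1 e2.
  case: A1 => T1 G1; case: A2 => T2 G2; split.
    by case: linTt => _ _; apply.
  by rewrite linGt0 ?G1 ?G2 ?scaler0 ?addr0 //; [exists k1 | exists k2].
- move=> u x hu cu.
  have Hsel : forall n, {gk : H * H | At0 gk.1 gk.2 /\ gk.2 - l^* *: gk.1 = u n}.
    move=> n; apply: constructive_indefinite_description.
    by have [g [k hk]] := hu n; exists (g, k).
  pose gs n := (sval (Hsel n)).1; pose ks n := (sval (Hsel n)).2.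
  have Ags n : At0 (gs n) (ks n) by exact: (proj1 (svalP (Hsel n))).
  have eks n : ks n = u n + l^* *: gs n.
    by have [_ e] := svalP (Hsel n); apply/eqP; rewrite -subr_eq; apply/eqP; exact: e.
  have adjs n : adjoint ipH ipH A0 (gs n) (ks n) by exact: (proj2 (M1 _ _) (Ags n)).
  have cu' := conv_cauchy HipH cu.
  have cg : cauchy ipH gs.
    move=> e e0; have eK : 0 < e / (K + 1) by rewrite divr_gt0 //; lra.
    have [N HN] := cu' _ eK; exists N => m n hm hn.
    have := bb _ _ (adjlin _ _ _ _ (adjs m) (adjs n)).
    have -> : ks m - ks n - l^* *: (gs m - gs n) = u m - u n.
      by rewrite !eks scalerBr vec_id3.
    have h := HN m n hm hn.
    have q : K * nm ipH (u m - u n) <= (K + 1) * nm ipH (u m - u n).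
      by rewrite ler_wpM2r ?nm_ge0 //; lra.
    have q2 : (K + 1) * nm ipH (u m - u n) < (K + 1) * (e / (K + 1)) by rewrite ltr_pM2l //; lra.
    have q3 : (K + 1) * (e / (K + 1)) = e by field; lra.
    lra.
  have [gl cgl] := completeR HipH Hcomp cg.
  have ckl := conv_lin HipH cu cgl eks.
  have adjl : adjoint ipH ipH A0 gl (x + l^* *: gl).
    apply: (adj_closed HipH (u := gs) (v := ks)) => //; by apply/(convergesP HipH).
  exists gl, (x + l^* *: gl); split; first exact/M1.
  by rewrite addrK.
- move=> d hd.
  have adj : adjoint ipH ipH At0 d (l *: d).
    move=> g k Agk; have := hd _ (ex_intro _ g (ex_intro _ k (conj Agk erefl))).
    rewrite (ipBl HipH) (ipZl HipH) (ipZr HipH) => /eqP; rewrite subr_eq0 => /eqP ->.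
    done.
  have Ad : A0 d (l *: d) by apply/M2.
  by apply: (inj0 _ _ _ _ Ad A00); rewrite subrr scaler0 subr0.
Qed.
End K2.

Lemma vec_id4 (X : zmodType) (y a b : X) : (y - a + b) - y = b - a.
Proof. by rewrite addrAC (addrC y (-a)) addrK addrC. Qed.
Lemma vec_id5 (X : zmodType) (y1 y2 a1 a2 : X) : y1 - a1 = y2 - a2 -> y1 - y2 = a1 - a2.
Proof. by move=> e; rewrite -(subrK a1 y1) e vec_id4. Qed.
Lemma conjCB (R : realType) (a b : R[i]) : (a - b)^* = a^* - b^*.
Proof. exact: rmorphB. Qed.

Unset Implicit Arguments.

Theorem theorem4p6
  (R : realType) (H G : lmodType R[i])
  (ipH : H -> H -> R[i]) (ipG : G -> G -> R[i])
  (hilH : is_hilbert ipH) (sepH : separable ipH) (hilG : is_hilbert ipG)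
  (* the adjoint pair {S, St} *)
  (S St : oprel H H)
  (linS : linear_op S) (linSt : linear_op St)
  (denseS : dense ipH (dom S)) (denseSt : dense ipH (dom St))
  (closedS : closed_op ipH ipH S) (closedSt : closed_op ipH ipH St)
  (adjpair : forall f g Sf Stg, S f Sf -> St g Stg -> ipH Sf g = ipH f Stg)
  (* cores T of S^* and Tt of St^* *)
  (T Tt : oprel H H) (linT : linear_op T) (linTt : linear_op Tt)
  (subT : op_sub T (adjoint ipH ipH S)) (subTt : op_sub Tt (adjoint ipH ipH St))
  (coreT : releq (rclosure ipH ipH T) (adjoint ipH ipH S))
  (coreTt : releq (rclosure ipH ipH Tt) (adjoint ipH ipH St))
  (* the boundary maps *)
  (Gam0 Gam1 Gamt0 Gamt1 : H -> G)
  (linG0 : linear_on (dom T) Gam0) (linG1 : linear_on (dom T) Gam1)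
  (linGt0 : linear_on (dom Tt) Gamt0) (linGt1 : linear_on (dom Tt) Gamt1)
  (* (G) abstract Green identity *)
  (condG : forall f g Tf Ttg, T f Tf -> Tt g Ttg ->
      ipH Tf g - ipH f Ttg = ipG (Gam1 f) (Gamt0 g) - ipG (Gam0 f) (Gamt1 g))
  (* (D) density of ran Gamma_0 and ran Gammat_0 *)
  (condD : dense ipG (fun phi => exists f, dom T f /\ Gam0 f = phi) /\
           dense ipG (fun phi => exists g, dom Tt g /\ Gamt0 g = phi))
  (* (M) A_0^* = At_0 and At_0^* = A_0 *)
  (condM : releq (adjoint ipH ipH (restr_ker T Gam0)) (restr_ker Tt Gamt0) /\
           releq (adjoint ipH ipH (restr_ker Tt Gamt0)) (restr_ker T Gam0))
  (rho_ne : exists mu : R[i], in_resolvent ipH (restr_ker T Gam0) mu)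
  (* the parameters B1 B2 B1' B2' *)
  (B1 B2 B1' B2' : oprel G G)
  (linB1 : linear_op B1) (linB2 : linear_op B2)
  (linB1' : linear_op B1') (linB2' : linear_op B2')
  (symB : forall phi psi x y, rcomp B1 B2 phi x -> rcomp B1' B2' psi y ->
      ipG x psi = ipG phi y)
  (l : R[i]) (hl : in_resolvent ipH (restr_ker T Gam0) l)
  (h1 : forall f : H, exists z : G,
      adjoint ipG ipH (gamma_field Tt Gamt0 l^*) f z /\
      exists w, B2 z w /\
        ran (id_minus (rcomp B2 (rcomp (weyl T Gam0 Gam1 l) B1))) w)
  (h2 : forall g : H, exists z : G,
      adjoint ipG ipH (gamma_field T Gam0 l) g z /\
      exists w, B2' z w /\
        ran (id_minus (rcomp B2' (rcomp (weyl Tt Gamt0 Gamt1 l^*) B1'))) w) :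
  releq (ext_op T Gam0 Gam1 B1 B2)
        (adjoint ipH ipH (ext_op Tt Gamt0 Gamt1 B1' B2')) /\
  closed_op ipH ipH (ext_op T Gam0 Gam1 B1 B2) /\
  in_resolvent ipH (ext_op T Gam0 Gam1 B1 B2) l.

Proof.
have [HipH HcompH] := hilH.
have HipG := hilG.1.
case: condD => DT DTt; case: condM => M1 M2.
have hl' := hl; case: hl' => sv0 surj0 inj0 _.
have surjt0 := K2 hilH linT linG0 linTt linGt0 M1 M2 hl.
have tot1 := total_gamma HipG linTt linGt0 surjt0 DTt.
have tot2 := total_gamma HipG linT linG0 surj0 DT.
have green2 : forall f g Tf Ttg, Tt f Tf -> T g Ttg ->
    ipH Tf g - ipH f Ttg = ipG (Gamt1 f) (Gam0 g) - ipG (Gamt0 f) (Gam1 g).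
  move=> f g Tf Tg hf hg; have E := condG _ _ _ _ hg hf.
  have E' := congr1 (fun z => - z^*) E; simpl in E'.
  rewrite !conjCB -!(ipC HipH) -!(ipC HipG) !opprB in E'.
  exact: E'.
have surjAB := genS HipH HipG linT linG0 linG1 linB2 condG (conjCK l) surj0 tot1 h1.
have surjAtB := genS HipH HipG linTt linGt0 linGt1 linB2' green2 (erefl (l^*)) surjt0 tot2 h2.
set AB := ext_op T Gam0 Gam1 B1 B2.
set AtB := ext_op Tt Gamt0 Gamt1 B1' B2'.
have GS : forall f y g k, AB f y -> AtB g k -> ipH y g = ipH f k.
  move=> f y g k [Tfy Bf] [Tgk Bg]; have := condG _ _ _ _ Tfy Tgk.
  rewrite (symB _ _ _ _ Bf Bg) subrr => /eqP; rewrite subr_eq0 => /eqP.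
  done.
have kill : forall d, (forall g k, AtB g k -> ipH k d = ipH g (l *: d)) -> d = 0.
  move=> d hd; apply: (ipxx_eq0 HipH).
  have [g [k [Agk e]]] := surjAtB d.
  by rewrite -{1}e (ipBl HipH) (ipZl HipH) (hd _ _ Agk) (ipZr HipH) subrr.
have fwd : forall x y, AB x y -> adjoint ipH ipH AtB x y.
  move=> x y Axy g k Agk.
  by rewrite (ipC HipH k x) (ipC HipH g y) (GS _ _ _ _ Axy Agk).
have bwd : forall h k, adjoint ipH ipH AtB h k -> AB h k.
  move=> h k adj; have [x [y [Axy e]]] := surjAB (k - l *: h).
  have ky : k - y = l *: (h - x).
    have -> : k = y - l *: x + l *: h by rewrite e subrK.
    by rewrite vec_id4 scalerBr.
  have d0 : h - x = 0.
    apply: kill => g k' Agk'.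
    by rewrite (ipBr HipH) (adj _ _ Agk') (fwd _ _ Axy _ _ Agk') -(ipBr HipH) ky.
  have hx : h = x by apply/eqP; rewrite -subr_eq0 d0.
  rewrite hx in ky; rewrite subrr scaler0 in ky.
  have yk : k = y by apply/eqP; rewrite -subr_eq0 ky.
  by rewrite hx yk.
have releqAB : releq AB (adjoint ipH ipH AtB).
  by move=> x y; split; [apply: fwd | apply: bwd].
split=> //; split.
  move=> u v x y huv cu cv; apply: bwd.
  exact: (adj_closed HipH (fun n => fwd _ _ (huv n)) cu cv).
split.
- move=> x y1 y2 [T1 _] [T2 _]; case: linT => sv _ _; exact: sv _ _ _ T1 T2.
- exact: surjAB.
- move=> x1 y1 x2 y2 A1 A2 e.
  apply/eqP; rewrite -subr_eq0; apply/eqP; apply: kill => g k Agk.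
  rewrite (ipBr HipH) (fwd _ _ A1 _ _ Agk) (fwd _ _ A2 _ _ Agk) -(ipBr HipH).
  by rewrite (vec_id5 e) scalerBr.
pose P a := exists x y, AB x y /\ y - l *: x != 0 /\
  a = ((nm ipH (y - l *: x))^-1)%:C *: x.
have [c0 hc0] : exists c : R, forall a, P a -> nm ipH a <= c.
  apply: (ubp HipH HcompH) => k.
  have [g [k' [Agk ek]]] := surjAtB k; exists (nm ipH g).
  move=> a [x [y [Axy [hne ->]]]].
  have n0 : 0 < nm ipH (y - l *: x).
    rewrite lt0r nm_ge0 andbT; apply: contra hne => /eqP h0.
    by rewrite (nm_eq0 HipH h0).
  rewrite (ipZl HipH) abM ab_Rc; last by rewrite invr_ge0 ltW.
  have E : ipH x k = ipH (y - l *: x) g.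
    rewrite -ek (ipBr HipH) (ipZr HipH) conjCK (ipBl HipH) (ipZl HipH).
    by rewrite -(GS _ _ _ _ Axy Agk).
  rewrite E [_^-1 * _]mulrC ler_pdivrMr //.
  have := CS HipH (y - l *: x) g; rewrite mulrC; done.
exists c0%:C => x y Axy.
rewrite !(hnormE HipH) -RcM lecR.
case: (eqVneq (y - l *: x) 0) => [h0 | hne].
  have x0 : x = 0.
    apply: kill => g k Agk.
    have -> : l *: x = y by apply/eqP; rewrite eq_sym -subr_eq0 h0.
    exact: fwd _ _ Axy _ _ Agk.
  by rewrite h0 x0 !(nm0 HipH) mulr0.
have n0 : 0 < nm ipH (y - l *: x).
  rewrite lt0r nm_ge0 andbT; apply: contra hne => /eqP h0.
  by rewrite (nm_eq0 HipH h0).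
have := hc0 _ (ex_intro _ x (ex_intro _ y (conj Axy (conj hne erefl)))).
rewrite (nmZ HipH) ab_Rc; last by rewrite invr_ge0 ltW.
by rewrite [_^-1 * _]mulrC ler_pdivrMr.
Qed.
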